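(* Let $2\le k\le n-1$, let $v_1,\dots,v_n$ be a basis of $\mathbb{C}^n$, let $i\in\{2,\dots,k\}$, $j\in\{k+1,\dots,n\}$, $h\in\{2,\dots,n\}$, and $a,b\in\mathbb{C}\setminus\{0\}$, and set $$t=a\,v_1\wedge\dots\wedge v_{i-1}\wedge v_j\wedge v_{i+1}\wedge\dots\wedge v_k\otimes v_1+b\,(v_1\wedge\dots\wedge v_k\otimes v_h+v_h\wedge v_2\wedge\dots\wedge v_k\otimes v_1).$$ Then: (i) if $h\in\{2,\dots,k\}$ (so $v_h\in\langle v_2,\dots,v_k\rangle$ and $v_h,v_j$ are not proportional), $t$ has $(2,1^{k-1})$-rank $2$; (ii) if $h\in\{k+1,\dots,n\}$ and $h\neq j$, $t$ has $(2,1^{k-1})$-rank $3$; (iii) if $h=j$, $t$ has $(2,1^{k-1})$-rank $2$.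
   Context: $\mathbb{S}_{(2,1^{k-1})}\mathbb{C}^n\subset\bigwedge^k\mathbb{C}^n\otimes\mathbb{C}^n$ is the Schur module of the partition $(2,1,\dots,1)$ ($k$ parts), the image of the Young symmetrizer (row symmetrization then column antisymmetrization, tableau filled column by column). An element has $(2,1^{k-1})$-rank $1$ if it equals $w_1\wedge\dots\wedge w_k\otimes w_1$ with $w_1,\dots,w_k$ linearly independent; the $(2,1^{k-1})$-rank of $t$ is the least $r$ such that $t$ is a sum of $r$ such elements. *)

(* Defs.v *)
From HB Require Import structures.
From mathcomp Require Import all_boot all_order all_algebra.
From mathcomp Require Import reals.
From mathcomp Require Import complex.
Set Implicit Arguments. Unset Strict Implicit. Unset Printing Implicit Defensive.
Import Order.TTheory GRing.Theory Num.Theory.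
Local Open Scope ring_scope.

(* Elements of  /\^k C^n (x) C^n  are modelled inside (C^n)^{(x)(k+1)} by their
   coordinates in the standard basis: t x y is the coefficient of
   e_{x 0} (x) ... (x) e_{x (k-1)} (x) e_y.  The wedge w_1 /\ ... /\ w_k is the
   antisymmetric tensor  sum_s sgn(s) w_{s 1} (x) ... (x) w_{s k}. *)
Definition tensor (C : Type) (k n : nat) := ('I_k -> 'I_n) -> 'I_n -> C.

Definition wedge_tensor (C : comRingType) (k n : nat) (W : 'M[C]_(k, n))
  (x : 'rV[C]_n) : tensor C k n :=
  fun a y => \det (\matrix_(m < k, l < k) W l (a m)) * x 0 y.

Definition schur_rank_one (C : fieldType) (k n : nat) (t : tensor C k n) :=
  exists W : 'M[C]_(k, n), row_free W /\
    exists i0 : 'I_k, (i0 : nat) = 0%N /\ t = wedge_tensor W (row i0 W).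

Definition schur_rank_le (C : fieldType) (k n : nat) (r : nat) (t : tensor C k n) :=
  exists T : 'I_r -> tensor C k n, (forall s, schur_rank_one (T s)) /\
    t = fun a y => \sum_(s < r) T s a y.

Definition schur_rank (C : fieldType) (k n : nat) (t : tensor C k n) (r : nat) :=
  schur_rank_le r t /\ forall r', schur_rank_le r' t -> (r <= r')%N.

Definition rows_of (C : Type) (k n : nat) (V : 'M[C]_n) (g : 'I_k -> 'I_n)
  : 'M[C]_(k, n) := \matrix_(l < k, c < n) V (g l) c.

(* With v_p = row p V (0-based: v_1 of the paper is row 0),
   t = a v_1/\..v_{i-1}/\v_j/\v_{i+1}..v_k (x) v_1
     + b (v_1/\..../\v_k (x) v_h + v_h/\v_2/\../\v_k (x) v_1).
   Indices i j h are 0-based here ('I_n); insubd d l is l viewed in 'I_n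
   (l < k <= n so the default d is never used). *)
Definition thm_tensor (C : comRingType) (k n : nat) (V : 'M[C]_n)
  (i j h : 'I_n) (a b : C) : tensor C k n :=
  let v1 := row (insubd h 0%N) V in
  let vh := row h V in
  fun x y =>
    a * wedge_tensor (rows_of V (fun l : 'I_k =>
          if (l : nat) == (i : nat) then j else insubd j (l : nat))) v1 x y
  + b * (wedge_tensor (rows_of V (fun l : 'I_k => insubd j (l : nat))) vh x y
       + wedge_tensor (rows_of V (fun l : 'I_k =>
          if (l : nat) == 0%N then h else insubd j (l : nat))) v1 x y).

(* Main.v *)
Require Import Defs.
From HB Require Import structures.
From mathcomp Require Import all_boot all_order all_algebra.
From mathcomp Require Import reals.
From mathcomp Require Import complex.
From mathcomp Require Import all_fingroup ring zify.
From Stdlib Require Import FunctionalExtensionality.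
Import Order.TTheory GRing.Theory Num.Theory.
Local Open Scope ring_scope.
Set Implicit Arguments. Unset Strict Implicit. Unset Printing Implicit Defensive.

Definition wdet (C : fieldType) (k n : nat) (W : 'M[C]_(k, n)) (a : 'I_k -> 'I_n) : C :=
  \det (\matrix_(m < k, l < k) W l (a m)).

Lemma cofactor_row'E (C : fieldType) k (A B : 'M[C]_k) i j :
  row' i A = row' i B -> cofactor A i j = cofactor B i j.
Proof.
move=> H; rewrite /cofactor; congr (_ * \det _).
apply/matrixP => x y; rewrite !mxE.
by have := congr1 (fun X : 'M_(_,_) => X x (lift j y)) H; rewrite !mxE.
Qed.

Lemma plucker_mx (C : fieldType) k (R : 'M[C]_k) (p0 pi : 'I_k) (x y z w : 'rV[C]_k) :
  p0 != pi ->
  let M (u v : 'rV[C]_k) := \matrix_(m, l) (if m == p0 then u 0 l else if m == pi then v 0 l else R m l) in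
  \det (M x y) * \det (M z w) = \det (M z y) * \det (M x w) + \det (M x z) * \det (M y w).
Proof.
move=> np M.
pose phi (v : 'rV[C]_k) := \sum_c v 0 c * cofactor (M x w) p0 c.
have phiE v : \det (M v w) = phi v.
  rewrite (expand_det_row _ p0); apply: eq_bigr => c _.
  rewrite /M mxE eqxx; congr (_ * _); apply: cofactor_row'E.
  by apply/matrixP => a b; rewrite !mxE [lift p0 a == p0]eq_sym (negbTE (neq_lift _ _)).
have phi_lin (cs : 'I_k -> C) (rs : 'I_k -> 'rV[C]_k) :
    phi (\sum_m cs m *: rs m) = \sum_m cs m * phi (rs m).
  rewrite /phi; under eq_bigr do rewrite summxE big_distrl /=.
  rewrite exchange_big /=; apply: eq_bigr => m _; rewrite big_distrr /=.
  by apply: eq_bigr => c _; rewrite !mxE mulrA.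
set Mxy := M x y.
pose u := z *m \adj Mxy.
have uE m : u 0 m = \det (\matrix_(m', l) (if m' == m then z 0 l else Mxy m' l)).
  rewrite (expand_det_row _ m) /u mxE; apply: eq_bigr => c _.
  rewrite !mxE eqxx; congr (_ * _); apply: cofactor_row'E.
  by apply/matrixP => a b; rewrite !mxE [lift m a == m]eq_sym (negbTE (neq_lift _ _)).
have key : \sum_m u 0 m *: row m Mxy = \det Mxy *: z.
  by rewrite -mulmx_sum_row /u -mulmxA mul_adj_mx mul_mx_scalar.
have := congr1 phi key; rewrite phi_lin.
have -> : phi (\det Mxy *: z) = \det Mxy * phi z.
  by rewrite /phi big_distrr /=; apply: eq_bigr => c _; rewrite [(\det Mxy *: z) 0 c]mxE -mulrA.
move=> H; rewrite [\det (M z w)]phiE -H.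
rewrite (bigD1 p0) //= (bigD1 pi) /=; last by rewrite eq_sym.
rewrite big1 ?addr0; last first.
  move=> m /andP[nm0 nm1]; rewrite -phiE.
  rewrite (@determinant_alternate _ _ _ p0 m) ?mulr0 1?eq_sym //.
  by move=> l; rewrite !mxE eqxx (negbTE nm0) (negbTE nm1).
have -> : row p0 Mxy = x by apply/rowP => l; rewrite !mxE eqxx.
have -> : row pi Mxy = y.
  by apply/rowP => l; rewrite !mxE eqxx eq_sym (negbTE np).
rewrite -(phiE x) -(phiE y) !uE.
have -> : \matrix_(m', l) (if m' == p0 then z 0 l else Mxy m' l) = M z y.
  by apply/matrixP => a b; rewrite !mxE; case: eqP.
have -> : \matrix_(m', l) (if m' == pi then z 0 l else Mxy m' l) = M x z.
  apply/matrixP => a b; rewrite !mxE; case: (a =P pi) => [->|]; last by [].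
  by rewrite eq_sym (negbTE np).
by [].
Qed.

Lemma plucker_wdet (C : fieldType) k n (W : 'M[C]_(k, n)) (p0 pi : 'I_k)
  (g : 'I_k -> 'I_n) (x y z w : 'I_n) : p0 != pi ->
  let D c d := wdet W (fun m => if m == p0 then c else if m == pi then d else g m) in
  D x y * D z w = D z y * D x w + D x z * D y w.
Proof.
move=> np D.
pose R := \matrix_(m < k, l < k) W l (g m).
pose u c := \row_(l < k) W l c.
have DE c d : D c d = \det (\matrix_(m, l) (if m == p0 then u c 0 l else if m == pi then u d 0 l else R m l)).
  rewrite /D /wdet; congr (\det _); apply/matrixP => a b; rewrite !mxE.
  by case: (a == p0); case: (a == pi); rewrite ?mxE.
rewrite !DE; exact: plucker_mx.
Qed.

Definition Tr (C : fieldType) k n (D : 'M[C]_n) (t : ('I_k -> 'I_n) -> 'I_n -> C) :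
  ('I_k -> 'I_n) -> 'I_n -> C :=
  fun al be => \sum_(a : {ffun 'I_k -> 'I_n}) \sum_(y < n) t a y * ((\prod_m D (a m) (al m)) * D y be).

Lemma wdet_mul (C : fieldType) k n (W : 'M[C]_(k, n)) (D : 'M[C]_n) (al : 'I_k -> 'I_n) :
  \sum_(a : {ffun 'I_k -> 'I_n}) wdet W a * \prod_m D (a m) (al m) = wdet (W *m D) al.
Proof.
rewrite /wdet /determinant.
under [RHS]eq_bigr => s _.
  under eq_bigr => m _ do rewrite !mxE.
  rewrite bigA_distr_bigA big_distrr /=.
  over.
rewrite exchange_big /=; apply: eq_bigr => f _.
rewrite big_distrl /=; apply: eq_bigr => s _.
rewrite -mulrA; congr (_ * _); rewrite -big_split /=.
by apply: eq_bigr => m _; rewrite !mxE.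
Qed.

Lemma Tr_wedge (C : fieldType) k n (W : 'M[C]_(k, n)) (x : 'rV[C]_n) (D : 'M[C]_n) al be :
  Tr D (fun a y => wdet W a * x 0 y) al be = wdet (W *m D) al * (x *m D) 0 be.
Proof.
rewrite /Tr -wdet_mul big_distrl /=; apply: eq_bigr => a _.
rewrite mxE big_distrr /=; apply: eq_bigr => y _.
by ring.
Qed.

Lemma Tr_sum (C : fieldType) k n (D : 'M[C]_n) r (T : 'I_r -> ('I_k -> 'I_n) -> 'I_n -> C) al be :
  Tr D (fun a y => \sum_(s < r) T s a y) al be = \sum_(s < r) Tr D (T s) al be.
Proof.
rewrite /Tr [RHS]exchange_big /=; apply: eq_bigr => a _.
rewrite [RHS]exchange_big /=; apply: eq_bigr => y _.
by rewrite big_distrl.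
Qed.

Lemma Tr_comb (C : fieldType) k n (D : 'M[C]_n) (f1 f2 f3 : ('I_k -> 'I_n) -> 'I_n -> C) c1 c2 al be :
  Tr D (fun a y => c1 * f1 a y + c2 * (f2 a y + f3 a y)) al be =
  c1 * Tr D f1 al be + c2 * (Tr D f2 al be + Tr D f3 al be).
Proof.
rewrite /Tr -big_split /= !big_distrr -big_split /=; apply: eq_bigr => a _.
rewrite -big_split /= !big_distrr -big_split /=; apply: eq_bigr => y _.
by ring.
Qed.

Definition upd (C : fieldType) k n (W : 'M[C]_(k, n)) (l : 'I_k) (u : 'rV[C]_n) : 'M[C]_(k, n) :=
  \matrix_(l', c) (if l' == l then u 0 c else W l' c).

Lemma wdetT (C : fieldType) k n (W : 'M[C]_(k, n)) al :
  wdet W al = \det (\matrix_(l, m) W l (al m)).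
Proof. by rewrite /wdet -det_tr; congr (\det _); apply/matrixP => x y; rewrite !mxE. Qed.

Lemma wdet_lin (C : fieldType) k n (W : 'M[C]_(k, n)) l c1 c2 u v al :
  wdet (upd W l (c1 *: u + c2 *: v)) al = c1 * wdet (upd W l u) al + c2 * wdet (upd W l v) al.
Proof.
rewrite !wdetT; apply: (@determinant_multilinear _ _ _ _ _ l).
- by apply/rowP => m; rewrite !mxE eqxx.
- by apply/matrixP => x y; rewrite !mxE [lift l x == l]eq_sym (negbTE (neq_lift _ _)).
- by apply/matrixP => x y; rewrite !mxE [lift l x == l]eq_sym (negbTE (neq_lift _ _)).
Qed.

Lemma wdet_alt (C : fieldType) k n (W : 'M[C]_(k, n)) l1 l2 al :
  l1 != l2 -> row l1 W = row l2 W -> wdet W al = 0.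
Proof.
move=> nl hr; rewrite wdetT (determinant_alternate nl) // => m.
by rewrite !mxE; have := congr1 (fun r : 'rV_n => r 0 (al m)) hr; rewrite !mxE.
Qed.

Lemma upd_comm (C : fieldType) k n (W : 'M[C]_(k, n)) l1 l2 u v :
  l1 != l2 -> upd (upd W l1 u) l2 v = upd (upd W l2 v) l1 u.
Proof.
move=> nl; apply/matrixP => x y; rewrite !mxE.
case: (x =P l2) => [->|]; last by [].
by rewrite eq_sym (negbTE nl).
Qed.

Lemma row_upd (C : fieldType) k n (W : 'M[C]_(k, n)) l u : row l (upd W l u) = u.
Proof. by apply/rowP => c; rewrite !mxE eqxx. Qed.

Lemma row_upd_ne (C : fieldType) k n (W : 'M[C]_(k, n)) l l' u :
  l' != l -> row l' (upd W l u) = row l' W.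
Proof. by move=> nl; apply/rowP => c; rewrite !mxE (negbTE nl). Qed.

Lemma wdet_rowfree (C : fieldType) k n (W : 'M[C]_(k, n)) al :
  wdet W al != 0 -> row_free W.
Proof.
move=> nz; pose S : 'M[C]_(n, k) := \matrix_(c, m) (1%:M : 'M[C]_n) c (al m).
have QE : W *m S = (\matrix_(m, l) W l (al m))^T.
  apply/matrixP => l m; rewrite !mxE.
  have := congr1 (fun X : 'M_(_,_) => X l (al m)) (mulmx1 W); rewrite mxE => <-.
  by apply: eq_bigr => c _; rewrite mxE.
have uQ : W *m S \in unitmx by rewrite unitmxE QE det_tr unitfE.
apply/row_freeP; exists (S *m invmx (W *m S)).
by rewrite mulmxA mulmxV.
Qed.

Lemma wdet_scale (C : fieldType) k n (W : 'M[C]_(k, n)) l c u al :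
  wdet (upd W l (c *: u)) al = c * wdet (upd W l u) al.
Proof.
have -> : c *: u = c *: u + 0 *: u by rewrite scale0r addr0.
by rewrite wdet_lin mul0r addr0.
Qed.

Lemma wdet_swap (C : fieldType) k n (W : 'M[C]_(k, n)) l1 l2 u v al :
  l1 != l2 -> wdet (upd (upd W l1 u) l2 v) al = - wdet (upd (upd W l1 v) l2 u) al.
Proof.
move=> nl.
have H0 : wdet (upd (upd W l1 (1 *: u + 1 *: v)) l2 (1 *: u + 1 *: v)) al = 0.
  apply: (wdet_alt (l1 := l1) (l2 := l2)) => //.
  by rewrite (row_upd_ne _ _ nl) !row_upd.
rewrite wdet_lin !(upd_comm _ _ _ nl) !wdet_lin in H0.
rewrite (@wdet_alt _ _ _ (upd (upd W l2 u) l1 u) l1 l2) in H0; last 2 first.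
- by [].
- by rewrite row_upd row_upd_ne 1?eq_sym // row_upd.
rewrite (@wdet_alt _ _ _ (upd (upd W l2 v) l1 v) l1 l2) in H0; last 2 first.
- by [].
- by rewrite row_upd row_upd_ne 1?eq_sym // row_upd.
rewrite !mul1r !add0r addr0 in H0.
rewrite (upd_comm _ _ _ nl) [in RHS](upd_comm _ _ _ nl).
by apply/eqP; rewrite -addr_eq0 addrC H0.
Qed.

Lemma e_zero (C : fieldType) k n (g al : 'I_k -> 'I_n) m0 :
  (forall l, g l != al m0) -> wdet (rows_of (1%:M : 'M[C]_n) g) al = 0.
Proof.
move=> H; rewrite /wdet (expand_det_row _ m0) big1 // => l _.
by rewrite !mxE (negbTE (H l)) mulr0n mul0r.
Qed.

Lemma e_perm (C : fieldType) k n (g al : 'I_k -> 'I_n) (s : 'S_k) :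
  injective g -> (forall m, al m = g (s m)) ->
  wdet (rows_of (1%:M : 'M[C]_n) g) al = (-1) ^+ s.
Proof.
move=> ig H; rewrite /wdet -det_perm; congr (\det _); apply/matrixP => m l.
by rewrite !mxE H (inj_eq ig) eq_sym.
Qed.

Lemma rank_le_Tr (C : fieldType) k n r (t : tensor C k n) (D : 'M[C]_n) :
  D \in unitmx -> schur_rank_le r t -> schur_rank_le r (Tr D t).
Proof.
move=> uD [T [HT ->]]; exists (fun s => Tr D (T s)); split.
  move=> s; have [W [fW [i0 [i00 ->]]]] := HT s.
  exists (W *m D); split.
    have/row_freeP [B HB] := fW; apply/row_freeP; exists (invmx D *m B).
    by rewrite mulmxA -(mulmxA W) mulmxV // mulmx1 HB.
  exists i0; split => //.
  apply: functional_extensionality => al; apply: functional_extensionality => be.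
  by rewrite row_mul; exact: Tr_wedge.
apply: functional_extensionality => al; apply: functional_extensionality => be.
exact: Tr_sum.
Qed.

Ltac kill vg0 vg1 vg2 vA vz0 := let l := fresh "l" in move=> l; apply/eqP => /(congr1 val); have := ltn_ord l;
  rewrite ?vg0 ?vg1 ?vg2 ?vA ?vz0 /=; repeat (case: ifP => /eqP); rewrite ?vz0; lia.
Ltac vq vg0 vg1 vg2 vA vz0 := let m := fresh "m" in move=> m; apply: val_inj; have := ltn_ord m;
  rewrite ?perm1 ?tpermL ?tpermR ?vg0 ?vg1 ?vg2 ?vA ?vz0 /=; repeat (case: ifP => /eqP); rewrite ?vz0 /=; lia.

Lemma lower_bounds (C : fieldType) (n k : nat)
  (hk2 : (2 <= k)%N) (hkn : (k <= n - 1)%N)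
  (i j h : 'I_n) (hi : (1 <= i < k)%N) (hj : (k <= j)%N) (hh : (1 <= h)%N)
  (a b : C) (ha : a != 0) (hb : b != 0) :
  let t := @thm_tensor _ k n 1%:M i j h a b in
  (forall r, schur_rank_le r t -> (2 <= r)%N) /\
  ((k <= h)%N -> h != j -> forall r, schur_rank_le r t -> (3 <= r)%N).
Proof.
move=> t.
case/andP: hi => hi1 hik.
have k0 : (0 < k)%N by lia.
pose p0 : 'I_k := Ordinal k0.
pose pi : 'I_k := Ordinal hik.
have np : p0 != pi by apply/eqP => /(congr1 val) /=; lia.
pose z0 : 'I_n := insubd h 0%N.
pose g0 := fun l : 'I_k => (insubd j (l : nat) : 'I_n).
pose g1 := fun l : 'I_k => if (l : nat) == (i : nat) then j else (insubd j (l : nat) : 'I_n).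
pose g2 := fun l : 'I_k => if (l : nat) == 0%N then h else (insubd j (l : nat) : 'I_n).
pose A (c d : 'I_n) := fun m : 'I_k => if m == p0 then c else if m == pi then d else g0 m.
have vins (l : 'I_k) : val (insubd j (l : nat) : 'I_n) = l.
  by rewrite val_insubd; case: ifP => //; have := ltn_ord l; lia.
have vz0 : val z0 = 0%N by rewrite val_insubd; case: ifP => //; have := ltn_ord h; lia.
have vg0 l : val (g0 l) = l by rewrite /g0 vins.
have vg1 l : val (g1 l) = if (l : nat) == (i : nat) then (j : nat) else l.
  by rewrite /g1; case: ifP; rewrite ?vins.
have vg2 l : val (g2 l) = if (l : nat) == 0%N then (h : nat) else l.
  by rewrite /g2; case: ifP; rewrite ?vins.
have vA c d m : val (A c d m) = if (m : nat) == 0%N then (c : nat) else if (m : nat) == (i : nat) then (d : nat) else m.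
  rewrite /A; have -> : (m == p0) = ((m : nat) == 0%N) by [].
  have -> : (m == pi) = ((m : nat) == (i : nat)) by [].
  by case: ifP => //; case: ifP => //; rewrite vg0.
pose E (g al : 'I_k -> 'I_n) := wdet (rows_of (1%:M : 'M[C]_n) g) al.
have tE al be : t al be = a * E g1 al * (z0 == be)%:R + b * (E g0 al * (h == be)%:R + E g2 al * (z0 == be)%:R).
  by rewrite /t /thm_tensor /wedge_tensor !mxE mulrA.
have hz0 : (h == z0) = false by apply/negbTE/eqP => /(congr1 val); rewrite vz0 /=; lia.
have FE al : t al z0 = a * E g1 al + b * E g2 al.
  by rewrite tE eqxx hz0 /= !mulr1 mulr0 add0r.
have GE al : t al h = b * E g0 al.
  by rewrite tE eqxx eq_sym hz0 /= !mulr1 !mulr0 addr0 add0r.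
pose xy := A z0 i. pose xz := A z0 j.
have ig0 : injective g0.
  move=> x y /(congr1 val); rewrite !vg0 => H; apply: val_inj; exact: H.
have ig1 : injective g1.
  move=> x y /(congr1 val); rewrite !vg1 => H; apply: val_inj; move: H.
  have := ltn_ord x; have := ltn_ord y; rewrite /=; repeat (case: ifP => /eqP); lia.
have E0xy : E g0 xy = 1.
  rewrite /E (@e_perm _ _ _ _ _ 1) ?odd_perm1 ?expr0 //; vq vg0 vg1 vg2 vA vz0.
have E1xy : E g1 xy = 0 by apply: (@e_zero _ _ _ _ _ pi); kill vg0 vg1 vg2 vA vz0.
have E2xy : E g2 xy = 0 by apply: (@e_zero _ _ _ _ _ p0); kill vg0 vg1 vg2 vA vz0.
have E1xz : E g1 xz = 1.
  rewrite /E (@e_perm _ _ _ _ _ 1) ?odd_perm1 ?expr0 //; vq vg0 vg1 vg2 vA vz0.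
have E0xz : E g0 xz = 0 by apply: (@e_zero _ _ _ _ _ pi); kill vg0 vg1 vg2 vA vz0.
have E2xz : E g2 xz = 0 by apply: (@e_zero _ _ _ _ _ p0); kill vg0 vg1 vg2 vA vz0.
have Fxy : t xy z0 = 0 by rewrite FE E1xy E2xy !mulr0 addr0.
have Gxy : t xy h = b by rewrite GE E0xy mulr1.
have Fxz : t xz z0 = a by rewrite FE E1xz E2xz mulr1 mulr0 addr0.
have Gxz : t xz h = 0 by rewrite GE E0xz mulr0.
have lb2 : forall r, schur_rank_le r t -> (2 <= r)%N.
  move=> r [T [HT Ht]].
  have tS al be : t al be = \sum_s T s al be by rewrite Ht.
  rewrite leqNgt; apply/negP => hr.
  case: r T HT Ht tS hr => [|[|r]] T HT Ht tS hr //.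
    by move: (tS xz z0); rewrite big_ord0 Fxz; move/eqP; rewrite (negbTE ha).
  have [W [_ [i0 [_ TW]]]] := HT ord0.
  have tW al be : t al be = wdet W al * (row i0 W) 0 be by rewrite tS big_ord1 TW.
  have : t xy z0 * t xz h - t xy h * t xz z0 = 0 by rewrite !tW; ring.
  rewrite Fxy Gxy Fxz Gxz mul0r sub0r => /eqP; rewrite oppr_eq0.
  by rewrite mulf_eq0 (negbTE ha) (negbTE hb).
split => // hkh hhj r Hr.
have := lb2 r Hr; rewrite leq_eqVlt => /orP[/eqP er|]; last by [].
move: Hr; rewrite -er => -[T [HT Ht]].
have ig2 : injective g2.
  move=> x y /(congr1 val); rewrite !vg2 => H; apply: val_inj; move: H.
  have := ltn_ord x; have := ltn_ord y; rewrite /=; repeat (case: ifP => /eqP); lia.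
have hhj' : (h : nat) <> (j : nat) by move=> H; move: hhj; rewrite (val_inj H) eqxx.
pose zw := A j h. pose ji := A j i. pose xw := A z0 h. pose yw := A i h.
have E0zw : E g0 zw = 0 by apply: (@e_zero _ _ _ _ _ p0); kill vg0 vg1 vg2 vA vz0.
have E1zw : E g1 zw = 0 by apply: (@e_zero _ _ _ _ _ pi); kill vg0 vg1 vg2 vA vz0.
have E2zw : E g2 zw = 0 by apply: (@e_zero _ _ _ _ _ p0); kill vg0 vg1 vg2 vA vz0.
have E0ji : E g0 ji = 0 by apply: (@e_zero _ _ _ _ _ p0); kill vg0 vg1 vg2 vA vz0.
have E1ji : E g1 ji = 0 by apply: (@e_zero _ _ _ _ _ pi); kill vg0 vg1 vg2 vA vz0.
have E2ji : E g2 ji = 0 by apply: (@e_zero _ _ _ _ _ p0); kill vg0 vg1 vg2 vA vz0.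
have E0xw : E g0 xw = 0 by apply: (@e_zero _ _ _ _ _ pi); kill vg0 vg1 vg2 vA vz0.
have E1xw : E g1 xw = 0 by apply: (@e_zero _ _ _ _ _ pi); kill vg0 vg1 vg2 vA vz0.
have E2xw : E g2 xw = 0 by apply: (@e_zero _ _ _ _ _ p0); kill vg0 vg1 vg2 vA vz0.
have E0yw : E g0 yw = 0 by apply: (@e_zero _ _ _ _ _ pi); kill vg0 vg1 vg2 vA vz0.
have E1yw : E g1 yw = 0 by apply: (@e_zero _ _ _ _ _ pi); kill vg0 vg1 vg2 vA vz0.
pose eps : C := (-1) ^+ (tperm p0 pi).
have E2yw : E g2 yw = eps.
  rewrite /E (@e_perm _ _ _ _ _ (tperm p0 pi)) //.
  move=> m; apply: val_inj; move: (ltn_ord m) => hm.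
  case: (m =P p0) => [->|/eqP n0]; first by rewrite tpermL vg2 vA /=; case: ifP => /eqP //; lia.
  case: (m =P pi) => [->|/eqP n1]; first by rewrite tpermR vg2 vA /= (_ : ((i:nat) == 0%N) = false) ?eqxx //; apply/eqP; lia.
  rewrite tpermD 1?eq_sym // vg2 vA.
  have -> : ((m : nat) == 0%N) = false by apply/negbTE; move: n0; apply: contra => /eqP H; apply/eqP/val_inj.
  have -> : ((m : nat) == (i : nat)) = false by apply/negbTE; move: n1; apply: contra => /eqP H; apply/eqP/val_inj.
  by [].
have eps0 : eps != 0 by rewrite signr_eq0.
have Fzw : t zw z0 = 0 by rewrite FE E1zw E2zw !mulr0 addr0.
have Gzw : t zw h = 0 by rewrite GE E0zw mulr0.
have Fji : t ji z0 = 0 by rewrite FE E1ji E2ji !mulr0 addr0.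
have Gji : t ji h = 0 by rewrite GE E0ji mulr0.
have Fxw : t xw z0 = 0 by rewrite FE E1xw E2xw !mulr0 addr0.
have Gxw : t xw h = 0 by rewrite GE E0xw mulr0.
have Fyw : t yw z0 = b * eps by rewrite FE E1yw E2yw mulr0 add0r.
have Gyw : t yw h = 0 by rewrite GE E0yw mulr0.
have [W1 [_ [i1 [_ T1]]]] := HT ord0.
have [W2 [_ [i2 [_ T2]]]] := HT (lift ord0 ord0).
pose p1 := wdet W1. pose p2 := wdet W2.
pose X1 := (row i1 W1) 0 z0. pose Y1 := (row i1 W1) 0 h.
pose X2 := (row i2 W2) 0 z0. pose Y2 := (row i2 W2) 0 h.
have tW al be : t al be = p1 al * (row i1 W1) 0 be + p2 al * (row i2 W2) 0 be.
  by rewrite Ht big_ord_recl big_ord1 T1 T2.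
pose De := X1 * Y2 - X2 * Y1.
have hp1 al : De * p1 al = Y2 * t al z0 - X2 * t al h by rewrite !tW /De /X1 /X2 /Y1 /Y2; ring.
have hp2 al : De * p2 al = X1 * t al h - Y1 * t al z0 by rewrite !tW /De /X1 /X2 /Y1 /Y2; ring.
have hDe : De != 0.
  have : De * (p1 xy * p2 xz - p2 xy * p1 xz) = t xy z0 * t xz h - t xy h * t xz z0.
    by rewrite !tW /De /X1 /X2 /Y1 /Y2; ring.
  rewrite Fxy Gxy Fxz Gxz mul0r sub0r => H; apply/eqP => HD; move: H.
  rewrite HD mul0r => /eqP; by rewrite eq_sym oppr_eq0 mulf_eq0 (negbTE ha) (negbTE hb).
have zero1 al : t al z0 = 0 -> t al h = 0 -> p1 al = 0.
  move=> H1 H2; apply/eqP; move: (hp1 al); rewrite H1 H2 !mulr0 subr0 => /eqP.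
  by rewrite mulf_eq0 (negbTE hDe).
have zero2 al : t al z0 = 0 -> t al h = 0 -> p2 al = 0.
  move=> H1 H2; apply/eqP; move: (hp2 al); rewrite H1 H2 !mulr0 subr0 => /eqP.
  by rewrite mulf_eq0 (negbTE hDe).
have pl1 : p1 xy * p1 zw = p1 ji * p1 xw + p1 xz * p1 yw := plucker_wdet W1 g0 z0 i j h np.
have pl2 : p2 xy * p2 zw = p2 ji * p2 xw + p2 xz * p2 yw := plucker_wdet W2 g0 z0 i j h np.
rewrite (zero1 zw) // (zero1 ji) // mulr0 mul0r add0r in pl1.
rewrite (zero2 zw) // (zero2 ji) // mulr0 mul0r add0r in pl2.
have hY2 : Y2 = 0.
  have : (De * p1 xz) * (De * p1 yw) = 0 by rewrite mulrACA -pl1 !mulr0.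
  rewrite !hp1 Fxz Gxz Fyw Gyw !mulr0 !subr0 => /eqP.
  rewrite !mulf_eq0 (negbTE ha) (negbTE hb) (negbTE eps0) !orbF orbb => /eqP //.
have hY1 : Y1 = 0.
  have : (De * p2 xz) * (De * p2 yw) = 0 by rewrite mulrACA -pl2 !mulr0.
  rewrite !hp2 Fxz Gxz Fyw Gyw !mulr0 !sub0r mulrNN => /eqP.
  rewrite !mulf_eq0 (negbTE ha) (negbTE hb) (negbTE eps0) !orbF orbb => /eqP //.
by move: hDe; rewrite /De -/Y1 -/Y2 hY1 hY2 !mulr0 subrr eqxx.
Qed.

Ltac mq ep0 epi vg0 vg1 vg2 vz0 := let m := fresh "m" in move=> m; apply: val_inj; have := ltn_ord m;
  rewrite !fun_if ?ep0 ?epi ?vg0 ?vg1 ?vg2 ?vz0 /=; repeat (case: ifP => /eqP); rewrite ?vz0 /=; lia.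

Lemma rows1_ext (C : fieldType) k n (g g' : 'I_k -> 'I_n) :
  g =1 g' -> rows_of (1%:M : 'M[C]_n) g = rows_of 1%:M g'.
Proof. by move=> H; apply/matrixP => x y; rewrite !mxE H. Qed.

Lemma upd_rows1 (C : fieldType) k n (g : 'I_k -> 'I_n) l c :
  upd (rows_of (1%:M : 'M[C]_n) g) l (row c 1%:M) =
  rows_of 1%:M (fun l' => if l' == l then c else g l').
Proof. by apply/matrixP => x y; rewrite !mxE; case: ifP; rewrite ?mxE. Qed.

Lemma row_rows1 (C : fieldType) k n (g : 'I_k -> 'I_n) l :
  row l (rows_of (1%:M : 'M[C]_n) g) = row (g l) 1%:M.
Proof. by apply/rowP => c; rewrite !mxE. Qed.

Lemma r1 (C : fieldType) k n (W : 'M[C]_(k, n)) (p0 : 'I_k) al :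
  (p0 : nat) = 0%N -> wdet W al != 0 -> schur_rank_one (wedge_tensor W (row p0 W)).
Proof.
move=> h0 nz; exists W; split; first exact: wdet_rowfree nz.
by exists p0.
Qed.

Lemma upper_bounds (C : fieldType) (n k : nat)
  (hk2 : (2 <= k)%N) (hkn : (k <= n - 1)%N)
  (i j h : 'I_n) (hi : (1 <= i < k)%N) (hj : (k <= j)%N) (hh : (1 <= h)%N)
  (a b : C) (ha : a != 0) (hb : b != 0) (I : C) (hI : I * I = -1) (h2 : (2 : C) != 0) :
  let t := @thm_tensor _ k n 1%:M i j h a b in
  ((h < k)%N -> schur_rank_le 2 t) /\
  ((k <= h)%N -> schur_rank_le 3 t) /\
  (h = j -> schur_rank_le 2 t).
Proof.
move=> t.
case/andP: hi => hi1 hik.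
have k0 : (0 < k)%N by lia.
pose p0 : 'I_k := Ordinal k0.
pose pi : 'I_k := Ordinal hik.
have np : p0 != pi by apply/eqP => /(congr1 val) /=; lia.
pose z0 : 'I_n := insubd h 0%N.
pose g0 := fun l : 'I_k => (insubd j (l : nat) : 'I_n).
pose g1 := fun l : 'I_k => if (l : nat) == (i : nat) then j else (insubd j (l : nat) : 'I_n).
pose g2 := fun l : 'I_k => if (l : nat) == 0%N then h else (insubd j (l : nat) : 'I_n).
pose A (c d : 'I_n) := fun m : 'I_k => if m == p0 then c else if m == pi then d else g0 m.
have vins (l : 'I_k) : val (insubd j (l : nat) : 'I_n) = l.
  by rewrite val_insubd; case: ifP => //; have := ltn_ord l; lia.
have vz0 : val z0 = 0%N by rewrite val_insubd; case: ifP => //; have := ltn_ord h; lia.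
have vg0 l : val (g0 l) = l by rewrite /g0 vins.
have vg1 l : val (g1 l) = if (l : nat) == (i : nat) then (j : nat) else l.
  by rewrite /g1; case: ifP; rewrite ?vins.
have vg2 l : val (g2 l) = if (l : nat) == 0%N then (h : nat) else l.
  by rewrite /g2; case: ifP; rewrite ?vins.
have ep0 (m : 'I_k) : (m == p0) = ((m : nat) == 0%N) by [].
have epi (m : 'I_k) : (m == pi) = ((m : nat) == (i : nat)) by [].
have vA c d m : val (A c d m) = if (m : nat) == 0%N then (c : nat) else if (m : nat) == (i : nat) then (d : nat) else m.
  rewrite /A ep0 epi.
  by case: ifP => //; case: ifP => //; rewrite vg0.
pose E (g al : 'I_k -> 'I_n) := wdet (rows_of (1%:M : 'M[C]_n) g) al.
have tE al be : t al be = a * E g1 al * (z0 == be)%:R + b * (E g0 al * (h == be)%:R + E g2 al * (z0 == be)%:R).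
  by rewrite /t /thm_tensor /wedge_tensor !mxE mulrA.
pose xy := A z0 i. pose xz := A z0 j.
have ig0 : injective g0.
  move=> x y /(congr1 val); rewrite !vg0 => H; apply: val_inj; exact: H.
have ig1 : injective g1.
  move=> x y /(congr1 val); rewrite !vg1 => H; apply: val_inj; move: H.
  have := ltn_ord x; have := ltn_ord y; rewrite /=; repeat (case: ifP => /eqP); lia.
have E0xy : E g0 xy = 1.
  rewrite /E (@e_perm _ _ _ _ _ 1) ?odd_perm1 ?expr0 //; vq vg0 vg1 vg2 vA vz0.
have E1xy : E g1 xy = 0 by apply: (@e_zero _ _ _ _ _ pi); kill vg0 vg1 vg2 vA vz0.
have E2xy : E g2 xy = 0 by apply: (@e_zero _ _ _ _ _ p0); kill vg0 vg1 vg2 vA vz0.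
have E1xz : E g1 xz = 1.
  rewrite /E (@e_perm _ _ _ _ _ 1) ?odd_perm1 ?expr0 //; vq vg0 vg1 vg2 vA vz0.
pose B0 := rows_of (1%:M : 'M[C]_n) g0.
pose eR (c : 'I_n) := row c (1%:M : 'M[C]_n).
have eRE c be : eR c 0 be = (c == be)%:R by rewrite !mxE.
have g0p0 : g0 p0 = z0 by apply: val_inj; rewrite vg0 vz0.
have M1 : upd B0 pi (eR j) = rows_of 1%:M g1.
  by rewrite /B0 /eR upd_rows1; apply: rows1_ext.
have M2 : upd (upd B0 pi (eR i)) p0 (eR z0) = B0.
  rewrite /B0 /eR !upd_rows1; apply: rows1_ext; mq ep0 epi vg0 vg1 vg2 vz0.
have M3 : upd (upd B0 pi (eR i)) p0 (eR h) = rows_of 1%:M g2.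
  rewrite /B0 /eR !upd_rows1; apply: rows1_ext; mq ep0 epi vg0 vg1 vg2 vz0.
have M4 : upd (upd B0 pi (eR j)) p0 (eR z0) = rows_of 1%:M g1.
  rewrite /B0 /eR !upd_rows1; apply: rows1_ext; mq ep0 epi vg0 vg1 vg2 vz0.
have M5 al : wdet (upd (upd B0 pi (eR j)) p0 (eR j)) al = 0.
  apply: (wdet_alt (l1 := p0) (l2 := pi)) => //.
  by rewrite row_upd row_upd_ne 1?eq_sym // row_upd.
have rp0 (c u : 'rV[C]_n) : row p0 (upd (upd B0 p0 u) pi c) = u.
  by rewrite row_upd_ne // row_upd.
have wedgeE (W : 'M[C]_(k, n)) x al be : wedge_tensor W x al be = wdet W al * x 0 be by [].
pose W0 := upd B0 pi (a *: eR j).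
have wW0 al : wdet W0 al = a * E g1 al by rewrite /W0 wdet_scale M1.
have rW0 : row p0 W0 = eR z0.
  by rewrite /W0 row_upd_ne // /B0 row_rows1 g0p0.
have T0one : schur_rank_one (wedge_tensor W0 (row p0 W0)).
  by apply: (@r1 _ _ _ _ _ xz) => //; rewrite wW0 E1xz mulr1.
have hc : b / 2 + b / 2 = b by field.
have c0 : b / 2 != 0 by apply: contraNneq hb => e; rewrite -hc e addr0.
split; [|split].
-
  move=> hk.
  pose hp : 'I_k := Ordinal hk.
  have hpp0 : hp != p0 by apply/eqP => /(congr1 val) /=; lia.
  pose W1 := upd (upd B0 p0 (eR h)) hp (- b *: eR z0).
  have M6 : upd (upd B0 p0 (eR z0)) hp (eR h) = B0.
    rewrite /B0 /eR !upd_rows1; apply: rows1_ext => m; apply: val_inj; have := ltn_ord m.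
    have ehp : (m == hp) = ((m : nat) == (h : nat)) by [].
    rewrite !fun_if ehp ep0 vg0 vz0 /=; repeat (case: ifP => /eqP); lia.
  have wW1 al : wdet W1 al = b * E g0 al.
    by rewrite /W1 wdet_scale wdet_swap 1?eq_sym // M6 mulrNN.
  have rW1 : row p0 W1 = eR h by rewrite /W1 row_upd_ne 1?eq_sym // row_upd.
  have E2z al : E g2 al = 0.
    apply: (wdet_alt (l1 := p0) (l2 := hp)); first by rewrite eq_sym.
    rewrite !row_rows1; congr (row _ _); apply: val_inj; rewrite !vg2 /=.
    by case: ifP => /eqP //; lia.
  exists (fun s : 'I_2 => if (s : nat) == 0%N then wedge_tensor W0 (row p0 W0)
                         else wedge_tensor W1 (row p0 W1)); split.
    move=> s; case: ifP => _ //.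
    by apply: (@r1 _ _ _ _ _ xy) => //; rewrite wW1 E0xy mulr1.
  apply: functional_extensionality => al; apply: functional_extensionality => be.
  rewrite big_ord_recl big_ord1 /= tE !wedgeE wW0 wW1 rW0 rW1 !eRE E2z.
  by ring.
-
  move=> hkh.
  pose Ws (s r : C) := upd (upd B0 p0 (1 *: eR z0 + s *: eR h)) pi (r *: eR i).
  have wWs s r al : wdet (Ws s r) al = r * (1 * E g0 al + s * E g2 al).
    by rewrite /Ws wdet_scale upd_comm // wdet_lin M2 M3.
  have rWs s r be : (row p0 (Ws s r)) 0 be = 1 * (z0 == be)%:R + s * (h == be)%:R.
    by rewrite /Ws rp0 !mxE.
  have Wsone s r : r != 0 -> schur_rank_one (wedge_tensor (Ws s r) (row p0 (Ws s r))).
    by move=> r0; apply: (@r1 _ _ _ _ _ xy) => //; rewrite wWs E0xy E2xy mulr0 addr0 !mulr1.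
  exists (fun s : 'I_3 => if (s : nat) == 0%N then wedge_tensor W0 (row p0 W0)
                         else if (s : nat) == 1%N then wedge_tensor (Ws 1 (b / 2)) (row p0 (Ws 1 (b / 2)))
                         else wedge_tensor (Ws (-1) (- (b / 2))) (row p0 (Ws (-1) (- (b / 2))))); split.
    move=> s; case: ifP => _ //; case: ifP => _; apply: Wsone => //.
    by rewrite oppr_eq0.
  apply: functional_extensionality => al; apply: functional_extensionality => be.
  rewrite !big_ord_recl big_ord0 /= tE !wedgeE wW0 rW0 !wWs !rWs !eRE.
  rewrite -[in LHS]hc; by ring.
-
  move=> ehj.
  have hd : a / 2 + a / 2 = a by field.
  have M3' : upd (upd B0 pi (eR i)) p0 (eR j) = rows_of 1%:M g2 by rewrite -ehj.
  pose Wt (al be ga : C) := upd (upd B0 p0 (al *: eR z0 + be *: eR j)) pi (1 *: eR i + ga *: eR j).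
  have wWt x y z al : wdet (Wt x y z) al = 1 * (x * E g0 al + y * E g2 al) + z * (x * E g1 al + y * 0).
    rewrite /Wt wdet_lin !(upd_comm _ _ _ np) !wdet_lin M2 M3' M4 M5.
    by [].
  have rWt x y z be : (row p0 (Wt x y z)) 0 be = x * (z0 == be)%:R + y * (j == be)%:R.
    by rewrite /Wt rp0 !mxE.
  have Wtone x y z : x != 0 -> schur_rank_one (wedge_tensor (Wt x y z) (row p0 (Wt x y z))).
    move=> x0; apply: (@r1 _ _ _ _ _ xy) => //.
    by rewrite wWt E0xy E1xy E2xy !(mulr0, addr0, mul1r, mulr1).
  have I0 : I != 0.
    apply/negP => /eqP e; move: hI; rewrite e mul0r => /eqP.
    by rewrite eq_sym oppr_eq0 oner_eq0.
  exists (fun s : 'I_2 => if (s : nat) == 0%N then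
             wedge_tensor (Wt 1 (b / 2) (a / 2)) (row p0 (Wt 1 (b / 2) (a / 2)))
           else wedge_tensor (Wt I (- (I * (b / 2))) (- (a / 2))) (row p0 (Wt I (- (I * (b / 2))) (- (a / 2))))); split.
    by move=> s; case: ifP => _; apply: Wtone => //; rewrite oner_eq0.
  apply: functional_extensionality => al; apply: functional_extensionality => be.
  rewrite big_ord_recl big_ord1 /= tE !wedgeE !wWt !rWt ?eRE ehj.
  rewrite -[in LHS]hc -[in LHS]hd; by ring: hI.
Qed.

Lemma Tr_wedge' (C : fieldType) k n (W : 'M[C]_(k, n)) (x : 'rV[C]_n) (D : 'M[C]_n) al be :
  Tr D (wedge_tensor W x) al be = wedge_tensor (W *m D) (x *m D) al be.
Proof. exact: Tr_wedge. Qed.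

Lemma rows_of_mul (C : fieldType) k n (V D : 'M[C]_n) (g : 'I_k -> 'I_n) :
  rows_of V g *m D = rows_of (V *m D) g.
Proof. by apply/matrixP => x y; rewrite !mxE; apply: eq_bigr => c _; rewrite mxE. Qed.

Lemma Tr_thm (C : fieldType) k n (V D : 'M[C]_n) (i j h : 'I_n) a b al be :
  Tr D (@thm_tensor _ k n V i j h a b) al be = @thm_tensor _ k n (V *m D) i j h a b al be.
Proof.
rewrite /thm_tensor /= Tr_comb !Tr_wedge' -!row_mul !rows_of_mul.
by [].
Qed.

Unset Implicit Arguments.
Local Open Scope complex_scope.

(* 0-based indices: paper's i in {2..k}, j in {k+1..n}, h in {2..n}
   become 1 <= i < k, k <= j < n, 1 <= h < n. *)
Theorem mainTheorem13 (R : realType) (n k : nat)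
  (hk2 : (2 <= k)%N) (hkn : (k <= n - 1)%N)
  (V : 'M[R[i]]_n) (hV : V \in unitmx)
  (i j h : 'I_n) (hi : (1 <= i < k)%N) (hj : (k <= j)%N) (hh : (1 <= h)%N)
  (a b : R[i]) (ha : a != 0) (hb : b != 0) :
  let t := @thm_tensor _ k n V i j h a b in
  ((h < k)%N -> schur_rank t 2) /\
  ((k <= h)%N -> h != j -> schur_rank t 3) /\
  (h = j -> schur_rank t 2).
Proof.
move=> t.
pose t1 := @thm_tensor _ k n 1%:M i j h a b.
have E1 : Tr (invmx V) t = t1.
  apply: functional_extensionality => al; apply: functional_extensionality => be.
  by rewrite /t Tr_thm mulmxV.
have E2 : Tr V t1 = t.
  apply: functional_extensionality => al; apply: functional_extensionality => be.
  by rewrite /t1 Tr_thm mul1mx.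
have hI : 'i * 'i = -1 :> R[i] by rewrite -expr2 sqr_i.
have h2 : (2 : R[i]) != 0 by rewrite pnatr_eq0.
have [lb2 lb3] := lower_bounds hk2 hkn hi hj hh ha hb.
have [ub1 [ub2 ub3]] := upper_bounds hk2 hkn hi hj hh ha hb hI h2.
have up r : schur_rank_le r t1 -> schur_rank_le r t.
  by move=> H; rewrite -E2; apply: rank_le_Tr.
have down r : schur_rank_le r t -> schur_rank_le r t1.
  by move=> H; rewrite -E1; apply: rank_le_Tr => //; rewrite unitmx_inv.
split; [|split].
- move=> hk; split; first exact: up (ub1 hk).
  by move=> r H; apply: lb2; exact: down.
- move=> hk hhj; split; first exact: up (ub2 hk).
  by move=> r H; apply: (lb3 hk hhj); exact: down.
- move=> e; split; first exact: up (ub3 e).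
  by move=> r H; apply: lb2; exact: down.
Qed.
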